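(* Let $R$ be a P$v$MD and let $I$ be a proper $t$-ideal of $R$. If each minimal prime of $I$ is the radical of a $v$-finite divisorial ideal, then $I$ has only finitely many minimal ($t$-)primes.
   Context: $R$ is an integral domain with quotient field $K\neq R$. For nonzero $R$-submodules $A,B$ of $K$, $(A:B)=\{x\in K: xB\subseteq A\}$. For a nonzero fractional ideal $I$, $I_v=(R:(R:I))$ and $I_t=\bigcup\{J_v: J\subseteq I \text{ nonzero finitely generated}\}$. $I$ is divisorial if $I=I_v$ and a $t$-ideal if $I=I_t$; a $v$-finite divisorial ideal is an ideal of the form $J_v$ with $J$ finitely generated. A $t$-prime is a prime $t$-ideal; a $t$-maximal ideal is an ideal maximal among proper $t$-ideals. $R$ is a P$v$MD if $R_M$ is a valuation domain for every $t$-maximal ideal $M$. *)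

(* Defs.v *)
(* An integral domain R is represented as a subring of its
   quotient field K (a fieldType); fractional ideals / R-submodules of K are
   Prop-valued predicates on K. *)
From HB Require Import structures.
From mathcomp Require Import all_boot all_algebra.
Set Implicit Arguments. Unset Strict Implicit. Unset Printing Implicit Defensive.
Import GRing.Theory.
Local Open Scope ring_scope.

Section Ideals.
Variable K : fieldType.
Implicit Types (R A B I J M P Q : K -> Prop).

Definition subring R :=
  [/\ R 0, R 1, (forall x y, R x -> R y -> R (x - y))
    & (forall x y, R x -> R y -> R (x * y))].
Definition quotient_field_of R :=
  forall x, exists a b, [/\ R a, R b, b != 0 & x = a / b].
Definition domain_with_qf R :=
  [/\ subring R, quotient_field_of R & exists x, ~ R x].

Definition subset_of A B := forall x, A x -> B x.
Definition same_set A B := forall x, A x <-> B x.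
Definition nonzero A := exists x, A x /\ x != 0.

Definition submodule R A :=
  [/\ A 0, (forall x y, A x -> A y -> A (x + y))
    & (forall r x, R r -> A x -> A (r * x))].

Definition colon A B : K -> Prop := fun x => forall b, B b -> A (x * b).

Definition vclos R I : K -> Prop := colon R (colon R I).

Definition fin_gen R J :=
  exists s : seq K, forall x, J x <->
    exists c : 'I_(size s) -> K,
      (forall i, R (c i)) /\ x = \sum_(i < size s) c i * s`_i.

Definition tclos R I : K -> Prop :=
  fun x => exists J, [/\ fin_gen R J, nonzero J, subset_of J I & vclos R J x].

Definition t_ideal R I := same_set I (tclos R I).

Definition int_ideal R I := submodule R I /\ subset_of I R.
Definition is_proper R I := exists x, R x /\ ~ I x.

Definition is_prime_ideal R P :=
  [/\ int_ideal R P, is_proper R P &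
      forall a b, R a -> R b -> P (a * b) -> P a \/ P b].

Definition t_maximal R M :=
  [/\ int_ideal R M, nonzero M, is_proper R M, t_ideal R M &
      forall N, int_ideal R N -> nonzero N -> is_proper R N -> t_ideal R N ->
        subset_of M N -> same_set M N].

Definition localization R M : K -> Prop :=
  fun x => exists a s, [/\ R a, R s, ~ M s & x = a / s].

Definition valuation_domain (V : K -> Prop) :=
  forall x, x != 0 -> V x \/ V x^-1.

Definition PvMD R :=
  forall M, t_maximal R M -> valuation_domain (localization R M).

Definition minimal_prime R I P :=
  [/\ is_prime_ideal R P, subset_of I P &
      forall Q, is_prime_ideal R Q -> subset_of I Q -> subset_of Q P ->
        same_set Q P].

Definition radical R A : K -> Prop :=
  fun x => R x /\ exists n : nat, A (x ^+ n).

Definition vfinite_divisorial R A :=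
  exists J, [/\ fin_gen R J, nonzero J & same_set A (vclos R J)].

End Ideals.

(* Main.v *)
Require Import Defs.
From mathcomp Require Import all_boot all_algebra.
From Stdlib Require Import Classical.
From mathcomp Require Import ring.
Set Implicit Arguments. Unset Strict Implicit. Unset Printing Implicit Defensive.
Import GRing.Theory.
Local Open Scope ring_scope.

Section Helpers.
Variable K : fieldType.
Variable R : K -> Prop.
Hypothesis sR : subring R.

Lemma R0 : R 0. Proof. by case: sR. Qed.
Lemma R1 : R 1. Proof. by case: sR. Qed.
Lemma RB x y : R x -> R y -> R (x - y). Proof. by case: sR => _ _ h _; apply: h. Qed.
Lemma RM x y : R x -> R y -> R (x * y). Proof. by case: sR => _ _ _ h; apply: h. Qed.
Lemma RD x y : R x -> R y -> R (x + y).
Proof. move=> hx hy; have := RB hx (RB R0 hy); by rewrite sub0r opprK. Qed.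
Lemma RX x n : R x -> R (x ^+ n).
Proof. move=> hx; elim: n => [|n IH]; first exact: R1. by rewrite exprS; apply: RM. Qed.

Definition span (l : seq K) : K -> Prop := fun x =>
  exists c : 'I_(size l) -> K, (forall i, R (c i)) /\ x = \sum_(i < size l) c i * l`_i.

Lemma span_sub (X : K -> Prop) l : submodule R X -> (forall w, w \in l -> X w) ->
  forall x, span l x -> X x.
Proof.
case=> X0 XD XM hl x [c [hc ->]].
elim/big_ind: _ => //; move=> i _; apply: XM => //; apply: hl; exact: mem_nth.
Qed.

Lemma span_mem l w : w \in l -> span l w.
Proof.
move=> wl; have il : (index w l < size l)%N by rewrite index_mem.
exists (fun i : 'I_(size l) => if val i == index w l then 1 else 0); split.
  by move=> i; case: ifP => _; [exact: R1| exact: R0].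
rewrite (bigD1 (Ordinal il)) //= eqxx mul1r big1 ?addr0 ?nth_index //.
move=> i hi; case: ifP => [/eqP e|_]; last by rewrite mul0r.
by exfalso; move/negP: hi; apply; apply/eqP/val_inj.
Qed.

Lemma colon_span (y : K) l : (forall w, w \in l -> R (y * w)) -> forall x, span l x -> R (y * x).
Proof.
move=> h; apply: (span_sub (X := fun w => R (y * w))) => //; split.
- by rewrite mulr0; exact: R0.
- by move=> a b ha hb; rewrite mulrDr; apply: RD.
- by move=> r a hr ha; rewrite mulrCA; apply: RM.
Qed.

Lemma tclos_list X x : submodule R X -> (tclos R X x <->
  exists l : seq K, [/\ (forall w, w \in l -> X w), (exists2 w, w \in l & w != 0) &
     forall y, (forall w, w \in l -> R (y * w)) -> R (y * x)]).
Proof.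
move=> sX; split.
- case=> J [[s hs] [j [Jj j0]] JX vx]; exists s; split.
  + by move=> w ws; apply: JX; apply/hs; apply: span_mem.
  + apply: NNPP => hn; case/negP: j0; move/hs: Jj => [c [_ ->]].
    rewrite big1 // => i _; case: (eqVneq s`_i 0) => [->|ne]; first by rewrite mulr0.
    by exfalso; apply: hn; exists s`_i => //; apply: mem_nth.
  + move=> y hy; rewrite mulrC; apply: vx => b /hs Jb.
    exact: colon_span Jb.
- case=> l [lX [w wl w0] hy]; exists (span l); split.
  + by exists l.
  + by exists w; split => //; apply: span_mem.
  + exact: span_sub.
  + move=> b hb; rewrite mulrC; apply: hy => v vl; apply: hb; exact: span_mem.
Qed.

End Helpers.

From mathcomp Require boolp classical_sets.

Section Primes.
Variable K : fieldType.
Variable R : K -> Prop.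
Hypothesis sR : subring R.

Lemma prime_not1 P : is_prime_ideal R P -> ~ P 1.
Proof.
case=> [[[_ _ PM] _] [x [Rx nPx]] _] P1; apply: nPx.
by rewrite -[x]mulr1; apply: PM.
Qed.

Lemma prime_pow P x n : is_prime_ideal R P -> R x -> P (x ^+ n) -> P x.
Proof.
move=> hP Rx; elim: n => [|n IH]; first by move=> h; case: (prime_not1 hP).
rewrite exprS; case: hP => _ _ pr h.
case: (pr _ _ Rx (RX sR n Rx) h) => //; exact: IH.
Qed.

Lemma prime_mul P a b : is_prime_ideal R P -> R a -> R b -> ~ P a -> ~ P b -> ~ P (a * b).
Proof. by case=> _ _ pr Ra Rb na nb /(pr _ _ Ra Rb) []. Qed.

Lemma prime_powN P x n : is_prime_ideal R P -> R x -> ~ P x -> ~ P (x ^+ n).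
Proof. by move=> hP Rx nx h; apply: nx; apply: (prime_pow hP Rx h). Qed.

End Primes.

Section TMax.
Variable K : fieldType.
Variable R : K -> Prop.
Hypothesis dR : domain_with_qf R.

Let sR : subring R. Proof. by case: dR. Qed.

Definition tprop (N : K -> Prop) := forall l : seq K, (forall w, w \in l -> N w) ->
  ~ (forall y, (forall w, w \in l -> R (y * w)) -> R y).

Lemma notallR : ~ (forall y, R y).
Proof. by case: dR => _ _ [x nx] h; apply: nx. Qed.

Lemma list_nz (l : seq K) : (forall y, (forall w, w \in l -> R (y * w)) -> R y) ->
  exists2 w, w \in l & w != 0.
Proof.
move=> h; apply: NNPP => hn; apply: notallR => y; apply: h => w wl.
case: (eqVneq w 0) => [->|ne]; first by rewrite mulr0; exact: R0.
by exfalso; apply: hn; exists w.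
Qed.

Lemma sub_tclos X x : int_ideal R X -> nonzero X -> X x -> tclos R X x.
Proof.
move=> [sX XR] [m [Xm m0]] Xx; apply/(tclos_list sR _ sX).
exists [:: m; x]; split.
- by move=> w; rewrite !inE => /orP[/eqP->|/eqP->].
- by exists m => //; rewrite inE eqxx.
- by move=> y; apply; rewrite !inE eqxx orbT.
Qed.

Lemma tclos_R X x : subset_of X R -> submodule R X -> tclos R X x -> R x.
Proof.
move=> XR sX /(tclos_list sR _ sX) [l [lX _ h]].
rewrite -[x]mul1r; apply: h => w /lX /XR; by rewrite mul1r.
Qed.

Lemma tmax_prime M : t_maximal R M -> is_prime_ideal R M.
Proof.
case=> iM nzM pM tM mx; split => // a b Ra Rb Mab.
case: (classic (M a)) => [|nMa]; [by left|right].
case: (eqVneq b 0) => [->|b0]; first by case: (iM) => [[]].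
case: (iM) => [[M0 MD MM] MR].
pose N := fun x => R x /\ M (b * x).
have sN : submodule R N.
  split.
  - by split; [exact: R0| rewrite mulr0].
  - move=> x y [Rx Mx] [Ry My]; split; first exact: RD.
    by rewrite mulrDr; apply: MD.
  - move=> r x Rr [Rx Mx]; split; first exact: RM.
    by rewrite mulrCA; apply: MM.
have iN : int_ideal R N by split => // x [].
have MN : subset_of M N.
  by move=> x Mx; split; [exact: MR| apply: MM].
have nzN : nonzero N.
  by case: nzM => m [Mm m0]; exists m; split => //; apply: MN.
have tN : t_ideal R N.
  move=> x; split; first exact: sub_tclos.
  move=> hx; have Rx : R x by apply: tclos_R hx => // ? [].
  split => //; apply/(tM _); apply/(tclos_list sR _ (proj1 iM)).
  case/(tclos_list sR _ sN): hx => l [lN [w wl w0] h].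
  exists [seq b * v | v <- l]; split.
  - by move=> v /mapP [u ul ->]; case: (lN u ul).
  - by exists (b * w); [apply: map_f| rewrite mulf_neq0].
  - move=> y hy; rewrite mulrA; apply: h => u ul; rewrite -mulrA; apply: hy.
    exact: map_f.
case: (classic (is_proper R N)) => [prN|nprN].
  by exfalso; apply: nMa; apply/(mx N iN nzN prN tN MN); split => //; rewrite mulrC.
have : N 1.
  apply: NNPP => n1; apply: nprN; exists 1; split => //; exact: R1.
by case=> _; rewrite mulr1.
Qed.

End TMax.

Section Zorn.
Variable K : fieldType.
Variable R : K -> Prop.
Hypothesis dR : domain_with_qf R.

Let sR : subring R. Proof. by case: dR. Qed.

Lemma exists_tmax T : int_ideal R T -> nonzero T -> tprop R T ->
  exists M, t_maximal R M /\ subset_of T M.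
Proof.
move=> iT nzT tT.
pose fam N := [/\ int_ideal R N, subset_of T N & tprop R N].
pose Ty := {N : K -> Prop | fam N}.
pose rl := fun a b : Ty => boolp.asbool (subset_of (sval a) (sval b)).
have t0 : Ty by exists T; split.
have [m mmax] : exists m, classical_sets.premaximal rl m.
  apply: (classical_sets.ZL_preorder t0).
  - by move=> a; apply/boolp.asboolP.
  - move=> a b c /boolp.asboolP ab /boolp.asboolP bc; apply/boolp.asboolP.
    by move=> x /ab /bc.
  - move=> A tot.
    case: (classic (exists a, A a)) => [[a0 Aa0]|none]; last first.
      by exists t0 => s As; exfalso; apply: none; exists s.
    pose U := fun x => exists a, A a /\ sval a x.
    have big2 : forall a b, A a -> A b -> exists c, [/\ A c, subset_of (sval a) (sval c)
        & subset_of (sval b) (sval c)].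
      move=> a b Aa Ab; case: (tot a b Aa Ab) => /boolp.asboolP h.
        by exists b; split.
      by exists a; split.
    have Ul : forall l : seq K, (forall w, w \in l -> U w) ->
        exists a, A a /\ forall w, w \in l -> sval a w.
      elim=> [|v l IH] h; first by exists a0.
      have [a [Aa ha]] := IH (fun w wl => h w (@mem_behead _ (v :: _) _ wl)).
      have [b [Ab hb]] := h v (mem_head _ _).
      have [c [Ac ac bc]] := big2 a b Aa Ab.
      exists c; split => // w; rewrite inE => /orP[/eqP->|wl]; first exact: bc.
      by apply: ac; apply: ha.
    have fU : fam U.
      split.
      - split; [split|].
        + by exists a0; split => //; case: (svalP a0) => [[[]]].
        + move=> x y [a [Aa ax]] [b [Ab bx]].
          have [c [Ac ac bc]] := big2 a b Aa Ab.
          exists c; split => //; case: (svalP c) => [[[_ D _] _] _ _].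
          by apply: D; [apply: ac| apply: bc].
        + move=> r x Rr [a [Aa ax]]; exists a; split => //.
          by case: (svalP a) => [[[_ _ Mu] _] _ _]; apply: Mu.
        + by move=> x [a [Aa ax]]; case: (svalP a) => [[_ aR] _ _]; apply: aR.
      - by move=> x Tx; exists a0; split => //; case: (svalP a0) => _ h _; apply: h.
      - move=> l lU; have [a [Aa ha]] := Ul l lU.
        by case: (svalP a) => _ _ h; apply: h.
    exists (exist _ U fU) => s As; apply/boolp.asboolP => x sx /=.
    by exists s.
case: (svalP m) => iM TM tpM; set M := sval m in iM TM tpM.
have maxM : forall N, fam N -> subset_of M N -> subset_of N M.
  move=> N fN MN; have := mmax (exist _ N fN).
  by move=> /(_ (introT (boolp.asboolP _) MN)) /boolp.asboolP.
have nzM : nonzero M by case: nzT => x [Tx x0]; exists x; split => //; apply: TM.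
have M1 : ~ M 1.
  move=> M1; apply: (tpM [:: 1]); first by move=> w; rewrite inE => /eqP->.
  by move=> y h; rewrite -[y]mulr1; apply: h; rewrite mem_head.
case: (iM) => [[M0 MD MM] MR].
exists M; split => //; split => //.
- by exists 1; split => //; exact: R1.
- move=> x; split; first exact: sub_tclos.
  move=> hx; have Rx : R x by apply: tclos_R hx.
  case/(tclos_list sR _ (proj1 iM)): hx => l [lM _ hl].
  pose N := fun z => exists m r, [/\ M m, R r & z = m + r * x].
  suff fN : fam N.
    have MN : subset_of M N.
      by move=> z Mz; exists z, 0; split => //; [exact: R0 | rewrite mul0r addr0].
    by apply: (maxM N fN MN); exists 0, 1; split => //; [exact: R1| rewrite add0r mul1r].
  split.
  + split; [split|].
    * by exists 0, 0; split => //; [exact: R0| rewrite mul0r addr0].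
    * move=> a b [m1 [r1 [M1' R1' ->]]] [m2 [r2 [M2' R2' ->]]].
      exists (m1 + m2), (r1 + r2); split; [exact: MD| exact: RD|].
      by rewrite mulrDl; rewrite addrACA.
    * move=> r a Rr [m1 [r1 [M1' R1' ->]]]; exists (r * m1), (r * r1).
      by split; [exact: MM| exact: RM| rewrite mulrDr mulrA].
    * by move=> a [m1 [r1 [M1' R1' ->]]]; apply: (RD sR); [exact: (MR _ M1')| exact: RM].
  + by move=> z Tz; exists z, 0; split => //; [exact: TM| exact: R0| rewrite mul0r addr0].
  + move=> l' l'N hl'.
    have [ms [msM hms]] : exists ms : seq K, (forall w, w \in ms -> M w) /\
        forall y, (forall w, w \in ms -> R (y * w)) -> R (y * x) ->
          forall w, w \in l' -> R (y * w).
      elim: l' l'N {hl'} => [|v l' IH] h.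
        by exists [::]; split.
      have [ms [msM hms]] := IH (fun w wl => h w (@mem_behead _ (v :: _) _ wl)).
      have [m1 [r1 [M1' R1' ev]]] := h v (mem_head _ _).
      exists (m1 :: ms); split.
        by move=> w; rewrite inE => /orP[/eqP->|/msM].
      move=> y hy hyx w; rewrite inE => /orP[/eqP->|wl].
        rewrite ev mulrDr; apply: (RD sR); first by apply: hy; rewrite mem_head.
        by rewrite mulrCA; apply: (RM sR).
      by apply: hms => // u ul; apply: hy; rewrite inE ul orbT.
    apply: (tpM (ms ++ l)).
      by move=> w; rewrite mem_cat => /orP[/msM|/lM].
    move=> y hy; apply: hl' => w wl'; apply: hms => //.
      by move=> u ul; apply: hy; rewrite mem_cat ul.
    by apply: hl => u ul; apply: hy; rewrite mem_cat ul orbT.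
- move=> N iN nzN prN tN MN.
  have fN : fam N.
    split => //; first by move=> x /TM /MN.
    move=> l lN hl; have [w wl w0] := list_nz dR hl.
    have N1 : N 1.
      apply/(tN 1); apply/(tclos_list sR _ (proj1 iN)); exists l; split => //.
        by exists w.
      by move=> y /hl; rewrite mulr1.
    case: prN => z [Rz nNz]; apply: nNz; rewrite -[z]mulr1.
    by case: iN => [[_ _ h] _]; apply: h.
  by move=> x; split; [apply: MN| apply: maxM].
Qed.

End Zorn.

Theorem proposition1p4 (K : fieldType) (R I : K -> Prop) :
  domain_with_qf R -> PvMD R ->
  int_ideal R I -> nonzero I -> is_proper R I -> t_ideal R I ->
  (forall P, minimal_prime R I P ->
     exists A, [/\ vfinite_divisorial R A, subset_of A R &
                   same_set P (radical R A)]) ->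
  exists Ps : seq (K -> Prop),
    forall P, minimal_prime R I P ->
      exists i : nat, (i < size Ps)%N /\ same_set P (nth (fun _ => False) Ps i).
Proof.
move=> dR pv iI nzI prI tI hyp.
have sR : subring R by case: dR.
case: (iI) => [[I0 ID IM] IR].
pose inP P (Ps : seq (K -> Prop)) :=
  exists i : nat, (i < size Ps)%N /\ same_set P (nth (fun _ => False) Ps i).
pose Good x := exists Ps : seq (K -> Prop), forall P, minimal_prime R I P -> ~ inP P Ps ->
  exists z, [/\ R z, ~ P z & I (x * z)].
pose T x := R x /\ Good x.
have inPl : forall P Ps1 Ps2, inP P Ps1 -> inP P (Ps1 ++ Ps2).
  move=> P Ps1 Ps2 [i [lt e]]; exists i; rewrite size_cat nth_cat lt; split => //.
  exact: leq_trans lt (leq_addr _ _).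
have inPr : forall P Ps1 Ps2, inP P Ps2 -> inP P (Ps1 ++ Ps2).
  move=> P Ps1 Ps2 [i [lt e]]; exists (size Ps1 + i)%N.
  rewrite size_cat ltn_add2l nth_cat; split => //.
  by rewrite ltnNge leq_addr /= addKn.
have Tgather : forall l : seq K, (forall w, w \in l -> T w) ->
    exists Ps : seq (K -> Prop), forall P, minimal_prime R I P -> ~ inP P Ps ->
      exists z, [/\ R z, ~ P z & forall w, w \in l -> I (w * z)].
  elim=> [|v l IH] hl.
    exists [::] => P [pP _ _] _; exists 1; split => //; first exact: R1.
    exact: prime_not1 pP.
  have [Ps2 h2] := IH (fun w wl => hl w (@mem_behead _ (v :: _) _ wl)).
  have [Rv [Ps1 h1]] := hl v (mem_head _ _).
  exists (Ps1 ++ Ps2) => P mP nin.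
  have [z1 [Rz1 nz1 Iz1]] := h1 P mP (fun h => nin (inPl _ _ _ h)).
  have [z2 [Rz2 nz2 Iz2]] := h2 P mP (fun h => nin (inPr _ _ _ h)).
  case: (mP) => pP _ _.
  exists (z1 * z2); split; [exact: RM| exact: prime_mul pP _ _ nz1 nz2|].
  move=> w; rewrite inE => /orP[/eqP->|wl].
    by rewrite mulrA mulrC; apply: IM.
  by rewrite mulrCA; apply: IM => //; apply: Iz2.
case: (classic (tprop R T)) => [tpT|ntpT]; last first.
  have [l [lT hl]] : exists l : seq K, (forall w, w \in l -> T w) /\
      forall y, (forall w, w \in l -> R (y * w)) -> R y.
    apply: NNPP => hn; apply: ntpT => l lT hl; apply: hn; exists l; split => //.
  have [Ps hPs] := Tgather l lT.
  exists Ps => P mP; apply: NNPP => nin.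
  have [z [Rz nPz Iz]] := hPs P mP nin.
  case: (mP) => pP IP _.
  have z0 : z != 0.
    by apply/eqP => z0; apply: nPz; rewrite z0; case: pP => [[[]]].
  apply: nPz; apply: IP; apply/(tI z); apply/(tclos_list sR _ (proj1 iI)).
  have [w wl w0] := list_nz dR hl.
  exists [seq v * z | v <- l]; split.
  - by move=> v /mapP [u ul ->]; apply: Iz.
  - exists (w * z); first exact: map_f.
    by rewrite mulf_neq0.
  - move=> y hy; apply: hl => u ul; rewrite -mulrA (mulrC z); apply: hy; exact: map_f.
have IT : subset_of I T.
  move=> x Ix; split; first exact: IR.
  exists [::] => P [pP _ _] _; exists 1; split; [exact: R1| exact: prime_not1 pP|].
  by rewrite mulr1.
have iT : int_ideal R T.
  split; last by move=> x [].
  split.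
  - exact: IT.
  - move=> x y [Rx [Ps1 h1]] [Ry [Ps2 h2]]; split; first exact: RD.
    exists (Ps1 ++ Ps2) => P mP nin.
    have [z1 [Rz1 nz1 Iz1]] := h1 P mP (fun h => nin (inPl _ _ _ h)).
    have [z2 [Rz2 nz2 Iz2]] := h2 P mP (fun h => nin (inPr _ _ _ h)).
    case: (mP) => pP _ _.
    exists (z1 * z2); split; [exact: RM| exact: prime_mul pP _ _ nz1 nz2|].
    rewrite mulrDl; apply: ID.
      by rewrite mulrA mulrC; apply: IM.
    by rewrite mulrCA; apply: IM.
  - move=> r x Rr [Rx [Ps h]]; split; first exact: RM.
    exists Ps => P mP nin; have [z [Rz nz Iz]] := h P mP nin.
    by exists z; split => //; rewrite -mulrA; apply: IM.
have nzT : nonzero T by case: nzI => x [Ix x0]; exists x; split => //; apply: IT.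
have [M [tmM TM]] := exists_tmax dR iT nzT tpT.
have pM := tmax_prime dR tmM.
have vM := pv M tmM.
case: (pM) => [[[M0 MD MMul] MR] prM primeM].
have IMM : subset_of I M by move=> x /IT /TM.
have Mne0 : forall w, ~ M w -> w != 0 by move=> w nw; apply/eqP => w0; apply: nw; rewrite w0.
have cmp : forall a b, R a -> R b -> exists u w, [/\ R u, R w, ~ M w &
    (w * b = u * a \/ w * a = u * b)].
  move=> a b Ra Rb.
  case: (eqVneq a 0) => [->|a0].
    exists 0, 1; split; [exact: R0| exact: R1| exact: prime_not1 pM|].
    by right; rewrite mul1r mul0r.
  case: (eqVneq b 0) => [->|b0].
    exists 0, 1; split; [exact: R0| exact: R1| exact: prime_not1 pM|].
    by left; rewrite mul1r mul0r.
  have ba0 : b / a != 0 by rewrite mulf_neq0 // invr_eq0.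
  case: (vM _ ba0) => [[a' [s [Ra' Rs nMs e]]]|[a' [s [Ra' Rs nMs e]]]].
    exists a', s; split => //; left.
    have s0 := Mne0 _ nMs.
    have -> : b = a' / s * a by rewrite -e mulfVK.
    by rewrite mulrA (mulrC s) divfK.
  exists a', s; split => //; right.
  have s0 := Mne0 _ nMs.
  rewrite invf_div in e.
  have -> : a = a' / s * b by rewrite -e mulfVK.
  by rewrite mulrA (mulrC s) divfK.
have nMmul : forall a b, R a -> R b -> ~ M a -> ~ M b -> ~ M (a * b).
  by move=> a b Ra Rb; apply: prime_mul pM Ra Rb.
have nMpow : forall a n, R a -> ~ M a -> ~ M (a ^+ n).
  by move=> a n Ra; apply: prime_powN pM Ra.
pose Q := fun x => R x /\ exists s n, [/\ R s, ~ M s & I (s * x ^+ n)].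
have QM : subset_of Q M.
  move=> x [Rx [s [n [Rs nMs Is]]]].
  case: (primeM _ _ Rs (RX sR n Rx) (IMM _ Is)) => // h.
  exact: prime_pow pM Rx h.
have IQ : subset_of I Q.
  move=> x Ix; split; first exact: IR.
  exists 1, 1%N; split; [exact: R1| exact: prime_not1 pM| by rewrite mul1r expr1].
have sQ : submodule R Q.
  split.
  - by apply: IQ.
  - move=> x y [Rx [s [n [Rs nMs Is]]]] [Ry [s' [m [Rs' nMs' Is']]]].
    split; first exact: RD.
    have [u [w [Ru Rw nMw [e|e]]]] := cmp x y Rx Ry.
      exists (s * w ^+ n), n; split.
      + by apply: (RM sR) => //; apply: (RX sR).
      + by apply: nMmul => //; [apply: (RX sR)| apply: nMpow].
      + have e2 : w * (x + y) = (w + u) * x by rewrite mulrDr e mulrDl.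
        rewrite -mulrA -exprMn e2 exprMn mulrCA; apply: IM => //.
        by apply: (RX sR); apply: (RD sR).
    exists (s' * w ^+ m), m; split.
    + by apply: (RM sR) => //; apply: (RX sR).
    + by apply: nMmul => //; [apply: (RX sR)| apply: nMpow].
    + have e2 : w * (x + y) = (u + w) * y by rewrite mulrDr e mulrDl.
      rewrite -mulrA -exprMn e2 exprMn mulrCA; apply: IM => //.
      by apply: (RX sR); apply: (RD sR).
  - move=> r x Rr [Rx [s [n [Rs nMs Is]]]]; split; first exact: RM.
    exists s, n; split => //; rewrite exprMn mulrCA; apply: IM => //.
    exact: RX.
have pQ : is_prime_ideal R Q.
  split.
  - by split => // x [].
  - exists 1; split; first exact: R1.
    by move/QM; apply: prime_not1 pM.
  - move=> a b Ra Rb [Rab [s [n [Rs nMs Is]]]].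
    have [u [w [Ru Rw nMw [e|e]]]] := cmp a b Ra Rb.
      right; split => //; exists (s * w ^+ (n + n)), (n + n)%N; split.
      + by apply: (RM sR) => //; apply: (RX sR).
      + by apply: nMmul => //; [apply: (RX sR)| apply: nMpow].
      + have -> : s * w ^+ (n + n) * b ^+ (n + n) = (u ^+ n * w ^+ n) * (s * (a * b) ^+ n).
          rewrite -mulrA -exprMn exprD {1}e !exprMn.
          ring.
        by apply: IM => //; apply: (RM sR); apply: (RX sR).
    left; split => //; exists (s * w ^+ (n + n)), (n + n)%N; split.
    + by apply: (RM sR) => //; apply: (RX sR).
    + by apply: nMmul => //; [apply: (RX sR)| apply: nMpow].
    + have -> : s * w ^+ (n + n) * a ^+ (n + n) = (u ^+ n * w ^+ n) * (s * (a * b) ^+ n).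
        rewrite -mulrA -exprMn exprD {1}e !exprMn.
        ring.
      by apply: IM => //; apply: (RM sR); apply: (RX sR).
have mQ : minimal_prime R I Q.
  split => // Q' pQ' IQ' Q'Q x; split; first exact: Q'Q.
  case=> Rx [s [n [Rs nMs Is]]].
  case: (pQ') => _ _ pr.
  case: (pr _ _ Rs (RX sR n Rx) (IQ' _ Is)) => h.
    by exfalso; apply: nMs; apply: QM; apply: Q'Q.
  exact: prime_pow pQ' Rx h.
have [A [[J [[s0 hs0] nzJ eA] AR eQ]]] := hyp Q mQ.
have s0A : forall w, w \in s0 -> A w.
  move=> w ws; apply/eA => b hb; rewrite mulrC; apply: hb; apply/hs0.
  exact: span_mem.
have s0Q : forall w, w \in s0 -> Q w.
  move=> w ws; apply/eQ; split; first exact: AR (s0A w ws).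
  by exists 1%N; rewrite expr1; apply: s0A.
have [d0 d0s d00] : exists2 d, d \in s0 & d != 0.
  case: nzJ => j [/hs0 [c [_ ->]] j0].
  apply: NNPP => hn; case/negP: j0; rewrite big1 // => i _.
  case: (eqVneq s0`_i 0) => [->|ne]; first by rewrite mulr0.
  by exfalso; apply: hn; exists s0`_i => //; apply: mem_nth.
have divl : forall l : seq K, (forall w, w \in l -> R w) -> forall d, R d -> d != 0 ->
    exists g w, [/\ g \in d :: l, g != 0, R w, ~ M w &
      forall v, v \in d :: l -> exists u, R u /\ w * v = u * g].
  elim=> [|a l IH] hl d Rd dn0.
    exists d, 1; split => //; [exact: mem_head| exact: R1| exact: prime_not1 pM|].
    move=> v; rewrite inE => /eqP->; exists 1; split; [exact: R1| by rewrite !mul1r].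
  have Ra : R a by apply: hl; rewrite mem_head.
  have [g [w [gl g0 Rw nMw hw]]] := IH (fun v vl => hl v (@mem_behead _ (a :: _) _ vl)) d Rd dn0.
  have Rg : R g by move: gl; rewrite inE => /orP[/eqP->|/(@mem_behead _ (a :: _))/hl].
  have [u' [w' [Ru' Rw' nMw' [e|e]]]] := cmp a g Ra Rg.
    have a0 : a != 0.
      apply/eqP => a0; move: e; rewrite a0 mulr0 => /eqP; rewrite mulf_eq0.
      by rewrite (negbTE g0) orbF; apply/negP; apply: Mne0.
    exists a, (w * w'); split => //.
    + by rewrite !inE eqxx orbT.
    + exact: (RM sR).
    + exact: nMmul.
    move=> v; rewrite !inE => /orP[/eqP->|/orP[/eqP->|vl]].
    * have [u [Ru hu]] := hw d (mem_head _ _).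
      by exists (u * u'); split; [exact: (RM sR)| rewrite mulrAC hu -!mulrA; congr (_ * _); rewrite mulrC e].
    * by exists (w * w'); split; [exact: (RM sR)|].
    * have [u [Ru hu]] : exists u, R u /\ w * v = u * g by apply: hw; rewrite inE vl orbT.
      by exists (u * u'); split; [exact: (RM sR)| rewrite mulrAC hu -!mulrA; congr (_ * _); rewrite mulrC e].
  exists g, (w * w'); split => //.
  + by move: gl; rewrite !inE => /orP[->|->]; rewrite ?orbT.
  + exact: (RM sR).
  + exact: nMmul.
  move=> v; rewrite !inE => /orP[/eqP->|/orP[/eqP->|vl]].
  * have [u [Ru hu]] := hw d (mem_head _ _).
    by exists (u * w'); split; [exact: (RM sR)| rewrite mulrAC hu mulrAC].
  * by exists (w * u'); split; [exact: (RM sR)| rewrite -mulrA e mulrA].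
  * have [u [Ru hu]] : exists u, R u /\ w * v = u * g by apply: hw; rewrite inE vl orbT.
    by exists (u * w'); split; [exact: (RM sR)| rewrite mulrAC hu mulrAC].
have Rs0 : forall w, w \in s0 -> R w by move=> w /s0A /AR.
have [g [w [gs g0 Rw nMw hw]]] := divl s0 Rs0 d0 (Rs0 _ d0s) d00.
have gs0 : g \in s0 by move: gs; rewrite inE => /orP[/eqP->|].
have [Rg [sig [n0 [Rsig nMsig Isig]]]] := s0Q g gs0.
have hw' : forall v, v \in s0 -> exists u, R u /\ w * v = u * g.
  by move=> v vs; apply: hw; rewrite inE vs orbT.
pose S := sig * w ^+ n0.
have RS : R S by apply: (RM sR) => //; apply: (RX sR).
have nMS : ~ M S by apply: nMmul => //; [apply: (RX sR)| apply: nMpow].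
exfalso; apply: nMS; apply: TM; split => //.
exists [:: Q] => P mP nin.
case: (mP) => pP IP minP.
have [x Ax nPx] : exists2 x, A x & ~ P x.
  apply: NNPP => hn; apply: nin; exists 0%N; split => //= y.
  have QP : subset_of Q P.
    move=> z /eQ [Rz [k Azk]]; apply: (@prime_pow _ _ sR _ _ k pP Rz).
    by apply: NNPP => h; apply: hn; exists (z ^+ k).
  by split; [move=> Py; apply/(minP Q pQ IQ QP)| apply: QP].
have Rx : R x by apply: AR.
exists (x ^+ n0); split; [exact: (RX sR)| exact: prime_powN pP Rx nPx|].
have [r Rr er] : exists2 r, R r & w * x = r * g.
  have hy : forall j, J j -> R (w / g * j).
    move=> j /hs0; apply: colon_span => // v vs.
    have [u [Ru e]] := hw' v vs.
    by rewrite mulrAC e mulfK.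
  have := (proj1 (eA x) Ax) (w / g) hy => Rxy.
  exists (x * (w / g)) => //.
  by rewrite mulrA (mulrC x) divfK.
rewrite /S -mulrA -exprMn er exprMn mulrCA; apply: IM => //.
exact: (RX sR).
Qed.
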